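(* Let $F\langle X\rangle$ be an MN-algebra and let $A$ be a PI-algebra. If the completion $C\left(F\langle X\rangle/Id(A)\right)$ of the quotient normed algebra $F\langle X\rangle/Id(A)$ (with the quotient norm $\|f+Id(A)\|=\inf\{\|f+g\|: g\in Id(A)\}$) is nil, then $A$ is nilpotent.
   Context: All algebras are non-unitary associative over $F\in\{\mathbb{R},\mathbb{C}\}$. A normed algebra has a norm with $\|ab\|\le\|a\|\|b\|$; $C(B)$ denotes its completion. $F\langle X\rangle$ is the free non-unitary associative algebra over $F$ on $X=\{x_1,x_2,\dots\}$. For $f=f(x_1,\dots,x_n)$, $f^{(d_1,\dots,d_n)}$ denotes its multihomogeneous component of multidegree $(d_1,\dots,d_n)$ (the sum of terms whose monomials contain each $x_i$ exactly $d_i$ times). A norm on $F\langle X\rangle$ is multihomogeneous if $\|f^{(d_1,\dots,d_n)}\|\le\|f\|$ for all $f$ and all multidegrees; $F\langle X\rangle$ is an MN-algebra if it is a normed algebra for a multihomogeneous norm. $Id(A)$ is the set of polynomial identities of $A$ (polynomials $f$ with $f(a_1,\dots,a_m)=0$ for all $a_i\in A$); $A$ is PI if $Id(A)\ne\{0\}$. In this setting $Id(A)$ is a closed ideal so the quotient norm makes $F\langle X\rangle/Id(A)$ a normed algebra. Nil: every element nilpotent; nilpotent: all products of some fixed length $n$ vanish. *)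

(* Defs.v *)
From HB Require Import structures.
From mathcomp Require Import all_boot all_algebra.
From mathcomp Require Import reals.
From mathcomp Require Import complex.
From mathcomp Require Import monalg.

Set Implicit Arguments.
Unset Strict Implicit.
Unset Printing Implicit Defensive.

Import GRing.Theory Num.Theory.
Local Open Scope ring_scope.

(* The free associative algebra over F on X = {x_0, x_1, ...}.
   {malg F[{fmonom nat}]} is the (unital) free algebra F<X>^# : the monoid
   algebra of the free monoid of words over nat.  The free NON-unitary
   algebra F<X> is the subalgebra of elements with zero constant term. *)
Section FreeAlgebra.
Variable F : numFieldType.

Definition word := {fmonom nat}.
Definition FXu := {malg F[word]}.

Definition in_FX (f : FXu) : Prop := mcoeff (@mone word) f = 0.

Definition has_multideg (d : seq nat) (w : word) : bool :=
  all (fun x => x < size d)%N (w : seq nat) &&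
  all (fun i => count_mem i (w : seq nat) == nth 0%N d i) (iota 0 (size d)).

Definition mhcomp (d : seq nat) (f : FXu) : FXu :=
  [malg w in msupp f => if has_multideg d w then f@_w else 0].

Definition MN_norm (nrm : FXu -> F) : Prop :=
  [/\ (forall f, in_FX f -> 0 <= nrm f /\ (nrm f = 0 -> f = 0)),
      (forall f g, in_FX f -> in_FX g -> nrm (f + g) <= nrm f + nrm g),
      (forall (c : F) f, in_FX f -> nrm (c *: f) = `|c| * nrm f) &
      (forall f g, in_FX f -> in_FX g -> nrm (f * g) <= nrm f * nrm g)] /\
  (forall f (d : seq nat), in_FX f -> nrm (mhcomp d f) <= nrm f).

Variable A : lmodType F.
Variable mulA : A -> A -> A.

Definition nonunital_algebra : Prop :=
  [/\ associative mulA,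
      (forall (c : F) (x y z : A), mulA (c *: x + y) z = c *: mulA x z + mulA y z) &
      (forall (c : F) (x y z : A), mulA x (c *: y + z) = c *: mulA x y + mulA x z)].

Definition eval_word (a : nat -> A) (w : seq nat) : A :=
  if w is i :: w' then foldl (fun acc j => mulA acc (a j)) (a i) w' else 0.

Definition eval_poly (a : nat -> A) (f : FXu) : A :=
  \sum_(w <- finmap.enum_fset (msupp f)) f@_w *: eval_word a (w : seq nat).

Definition is_identity (f : FXu) : Prop :=
  in_FX f /\ forall a : nat -> A, eval_poly a f = 0.

Definition PI_algebra : Prop := exists f, is_identity f /\ f <> 0.

Definition nilpotent_algebra : Prop :=
  exists n : nat, forall (x : A) (s : seq A),
    size s = n -> foldl mulA x s = 0.

(* We only need the
   predicate "||f + Id(A)|| < e", i.e. exists g in Id(A), ||f + g|| < e. *)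
Variable nrm : FXu -> F.

Definition qnorm_lt (f : FXu) (e : F) : Prop :=
  exists g, is_identity g /\ nrm (f + g) < e.

(* The completion C(B): its elements are classes of Cauchy sequences of B
   (represented by sequences of representatives in F<X>), with pointwise
   operations; the class of (f_k) is zero iff ||f_k + Id(A)|| -> 0. *)
Definition quot_cauchy (f : nat -> FXu) : Prop :=
  (forall k, in_FX (f k)) /\
  forall e : F, 0 < e -> exists N : nat, forall k l : nat,
    (N <= k)%N -> (N <= l)%N -> qnorm_lt (f k - f l) e.

Definition quot_null (f : nat -> FXu) : Prop :=
  forall e : F, 0 < e -> exists N : nat, forall k : nat,
    (N <= k)%N -> qnorm_lt (f k) e.

Definition completion_quot_nil : Prop :=
  forall f : nat -> FXu, quot_cauchy f ->
    exists n : nat, (0 < n)%N /\ quot_null (fun k => f k ^+ n).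

End FreeAlgebra.

(* Main.v *)
Require Import Defs.
From HB Require Import structures.
From mathcomp Require Import all_boot all_algebra.
From mathcomp Require Import reals.
From mathcomp Require Import complex.
From mathcomp Require Import monalg.
From mathcomp Require Import finmap.
Import GRing.Theory Num.Theory.
Local Open Scope ring_scope.

Unset Strict Implicit.
Unset Printing Implicit Defensive.

Section NH.
Variables (F : numFieldType) (A : lmodType F) (mulA : A -> A -> A).
Hypothesis HA : nonunital_algebra mulA.
Local Notation "x ** y" := (mulA x y) (at level 40, left associativity).

Lemma mA x y z : x ** (y ** z) = x ** y ** z.
Proof. by case: HA => h _ _; rewrite h. Qed.
Lemma mDl x y z : (x + y) ** z = x ** z + y ** z.
Proof. by case: HA => _ h _; have := h 1 x y z; rewrite !scale1r. Qed.
Lemma mDr x y z : z ** (x + y) = z ** x + z ** y.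
Proof. by case: HA => _ _ h; have := h 1 z x y; rewrite !scale1r. Qed.
Lemma m0l z : 0 ** z = 0.
Proof. have h := mDl 0 0 z; rewrite addr0 in h.
by apply: (addrI (0 ** z)); rewrite addr0 -h. Qed.
Lemma m0r z : z ** 0 = 0.
Proof. have h := mDr 0 0 z; rewrite addr0 in h.
by apply: (addrI (z ** 0)); rewrite addr0 -h. Qed.
Lemma mZl c x z : (c *: x) ** z = c *: (x ** z).
Proof. by case: HA => _ h _; have := h c x 0 z; rewrite !addr0 m0l addr0. Qed.
Lemma mZr c x z : z ** (c *: x) = c *: (z ** x).
Proof. by case: HA => _ _ h; have := h c z x 0; rewrite !addr0 m0r addr0. Qed.
Lemma mNl x z : (- x) ** z = - (x ** z).
Proof. by rewrite -scaleN1r mZl scaleN1r. Qed.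
Lemma msuml I (r : seq I) (P : pred I) (f : I -> A) z :
  (\sum_(i <- r | P i) f i) ** z = \sum_(i <- r | P i) (f i ** z).
Proof. by apply: (big_morph (fun u => u ** z)) => [u v|]; rewrite ?mDl ?m0l. Qed.
Lemma msumr I (r : seq I) (P : pred I) (f : I -> A) z :
  z ** (\sum_(i <- r | P i) f i) = \sum_(i <- r | P i) (z ** f i).
Proof. by apply: (big_morph (fun u => z ** u)) => [u v|]; rewrite ?mDr ?m0r. Qed.

Lemma foldl_mul s P b : P ** foldl mulA b s = foldl mulA (P ** b) s.
Proof. by elim: s b => [|c s IH] b //=; rewrite IH mA. Qed.

Definition pr (s : seq A) := if s is a :: s' then foldl mulA a s' else 0.

Lemma pr_catf s1 s2 : s1 != [::] -> pr (s1 ++ s2) = foldl mulA (pr s1) s2.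
Proof. by case: s1 => // a s1 _ /=; rewrite foldl_cat. Qed.

Lemma pr_cat s1 s2 : s1 != [::] -> s2 != [::] -> pr (s1 ++ s2) = pr s1 ** pr s2.
Proof. by move=> h1; case: s2 => // b s2 _; rewrite pr_catf //= foldl_mul. Qed.

Lemma pr_rcons s x : s != [::] -> pr (rcons s x) = pr s ** x.
Proof. by move=> h; rewrite -cats1 pr_catf. Qed.


Lemma pr_flat s1 s2 s3 : s2 != [::] -> pr (s1 ++ pr s2 :: s3) = pr (s1 ++ s2 ++ s3).
Proof.
move=> h2; case: s1 => [|a s1]; first by rewrite /= -pr_catf.
have -> : (a :: s1) ++ s2 ++ s3 = ((a::s1) ++ s2) ++ s3 by rewrite catA.
rewrite (pr_catf ((a :: s1) ++ s2)) // pr_cat // (pr_catf (a::s1)) //.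
rewrite [pr (pr s2 :: s3)]/= foldl_mul.
by case: s2 h2 => // b s2' _ /=; rewrite foldl_mul.
Qed.

Lemma foldl_lin c u v s : foldl mulA (c *: u + v) s = c *: foldl mulA u s + foldl mulA v s.
Proof.
elim: s u v => [|a s IH] u v //=.
by rewrite mDl mZl IH.
Qed.

Lemma pr_lin s1 s2 c u v : pr (s1 ++ (c *: u + v) :: s2) = c *: pr (s1 ++ u :: s2) + pr (s1 ++ v :: s2).
Proof.
case: s1 => [|a s1]; first by rewrite /= foldl_lin.
rewrite !(pr_catf (a :: s1)) //= mDr mZr foldl_lin //.
Qed.

Lemma pr_0 s1 s2 : pr (s1 ++ 0 :: s2) = 0.
Proof.
have h := pr_lin s1 s2 1 0 0; rewrite addr0 !scale1r in h.
by apply: (addrI (pr (s1 ++ 0 :: s2))); rewrite addr0 -h.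
Qed.

Lemma pr_sum s1 s2 I (r : seq I) (P : pred I) (f : I -> A) :
  pr (s1 ++ (\sum_(i <- r | P i) f i) :: s2) = \sum_(i <- r | P i) pr (s1 ++ f i :: s2).
Proof.
apply: (big_morph (fun u => pr (s1 ++ u :: s2))) => [u v|]; last exact: pr_0.
by have := pr_lin s1 s2 1 u v; rewrite !scale1r.
Qed.

Lemma pr_scale s1 s2 c u : pr (s1 ++ c *: u :: s2) = c *: pr (s1 ++ u :: s2).
Proof. by rewrite -[c *: u]addr0 pr_lin pr_0 addr0. Qed.


Lemma nseqSr (T : Type) n (v : T) : nseq n.+1 v = rcons (nseq n v) v.
Proof. by elim: n => //= n <-. Qed.

Definition isIdeal (I : A -> Prop) :=
  [/\ I 0, (forall x y, I x -> I y -> I (x + y)), (forall (c : F) x, I x -> I (c *: x)),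
      (forall a x, I x -> I (a ** x)) & (forall a x, I x -> I (x ** a))].

Section Ideal.
Variable I : A -> Prop.
Hypothesis HI : isIdeal I.

Lemma I0 : I 0. Proof. by case: HI. Qed.
Lemma ID x y : I x -> I y -> I (x + y). Proof. by case: HI => _ h _ _ _; apply: h. Qed.
Lemma IZ c x : I x -> I (c *: x). Proof. by case: HI => _ _ h _ _; apply: h. Qed.
Lemma IL a x : I x -> I (a ** x). Proof. by case: HI => _ _ _ h _; apply: h. Qed.
Lemma IR a x : I x -> I (x ** a). Proof. by case: HI => _ _ _ _ h; apply: h. Qed.
Lemma IN x : I x -> I (- x). Proof. by move=> h; rewrite -scaleN1r; apply: IZ. Qed.
Lemma IB x y : I x -> I y -> I (x - y). Proof. by move=> hx hy; apply: ID => //; apply: IN. Qed.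
Lemma Isum T (r : seq T) (P : pred T) (f : T -> A) :
  (forall i, P i -> I (f i)) -> I (\sum_(i <- r | P i) f i).
Proof. by move=> h; apply: big_ind => //; [exact: I0 | exact: ID]. Qed.
Lemma Ifoldl u s : I u -> I (foldl mulA u s).
Proof. by elim: s u => //= a s IH u hu; apply: IH; apply: IR. Qed.
Lemma Ipr s1 u s2 : I u -> I (pr (s1 ++ u :: s2)).
Proof.
move=> hu; case: s1 => [|a s1]; first by apply: Ifoldl.
by rewrite (pr_catf (a :: s1)) //=; apply: Ifoldl; apply: IL.
Qed.

Lemma vdm K (c : nat -> A) :
  (forall t : 'I_K, I (\sum_(k < K) ((t : nat)%:R ^+ k : F) *: c k)) ->
  forall k : 'I_K, I (c k).
Proof.
move=> H k.
pose a := \row_(j < K) ((j : nat)%:R : F).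
pose V := Vandermonde K a.
have hV : V \in unitmx.
  rewrite unitmxE unitfE det_Vandermonde.
  apply/prodf_neq0 => i _; apply/prodf_neq0 => j hij.
  by rewrite !mxE subr_eq0 eqr_nat eq_sym neq_ltn hij.
have -> : c k = \sum_(t < K) invmx V t k *: \sum_(k' < K) ((t : nat)%:R ^+ k' : F) *: c k'.
  symmetry.
  under eq_bigr do rewrite scaler_sumr.
  rewrite exchange_big /=.
  transitivity (\sum_(k' < K) (V *m invmx V) k' k *: c k').
    apply: eq_bigr => k' _; rewrite mxE scaler_suml; apply: eq_bigr => t _.
    by rewrite scalerA !mxE mulrC.
  rewrite mulmxV // (bigD1 k) //= mxE eqxx scale1r big1 ?addr0 // => k' hk'.
  by rewrite mxE (negbTE hk') scale0r.
by apply: Isum => t _; apply: IZ; apply: H.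
Qed.
End Ideal.

Fixpoint pc (x w : A) (j k : nat) : A :=
  match j with
  | 0 => match k with 0 => x | 1 => w | _ => 0 end
  | j'.+1 => match k with
             | 0 => pc x w j' 0 ** x
             | k'.+1 => pc x w j' k ** x + pc x w j' k' ** w end
  end.

Lemma pc_big x w j k : (j.+1 < k)%N -> pc x w j k = 0.
Proof.
elim: j k => [|j IH] [|[|k]] //= h.
by rewrite !IH ?m0l ?addr0 // ltnW.
Qed.

Lemma pc0 x w j : pc x w j 0 = pr (nseq j.+1 x).
Proof.
elim: j => // j IH.
rewrite (_ : pc x w j.+1 0 = pc x w j 0 ** x) // IH [in RHS]nseqSr pr_rcons //.
Qed.

Definition fl x w j := \sum_(0 <= i < j.+1) pr (nseq i x ++ w :: nseq (j - i) x).

Lemma pc1 x w j : pc x w j 1 = fl x w j.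
Proof.
rewrite /fl; elim: j => [|j IH]; first by rewrite big_nat1.
rewrite (_ : pc x w j.+1 1 = pc x w j 1 ** x + pc x w j 0 ** w) // IH pc0.
rewrite [in RHS]big_nat_recr // subnn (_ : nseq 0 x = [::]) // cats1 pr_rcons //.
rewrite msuml; congr (_ + _); apply: eq_big_nat => i /andP [_ hi].
by rewrite subSn // nseqSr -rcons_cons -rcons_cat pr_rcons //; case: (nseq i x).
Qed.

Lemma pc_eval x w j (t : F) :
  pr (nseq j.+1 (x + t *: w)) = \sum_(0 <= k < j.+2) t ^+ k *: pc x w j k.
Proof.
elim: j => [|j IH].
  by rewrite /= !big_nat_recl // big_geq // expr0 scale1r expr1 addr0.
rewrite [nseq j.+2 _]nseqSr pr_rcons // IH msuml.
under eq_bigr do rewrite mDr mZr !mZl scalerA -exprS.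
rewrite big_split /= [in RHS]big_nat_recl //=.
under [in RHS]eq_bigr do rewrite scalerDr.
rewrite [in RHS]big_split /= [X in X + _ = _]big_nat_recl //.
rewrite -addrA; congr (_ + _); congr (_ + _).
rewrite [in RHS]big_nat_recr //= pc_big // m0l scaler0 addr0.
by [].
Qed.

Lemma lin_I (I : A -> Prop) (HI : isIdeal I) M :
  (forall v, I (pr (nseq M.+1 v))) -> forall x w, I (fl x w M).
Proof.
move=> H x w; rewrite -pc1.
apply: (@vdm I HI M.+2 (pc x w M) _ (@Ordinal M.+2 1 isT)) => t.
by rewrite -(big_mkord xpredT (fun k => ((t : nat)%:R ^+ k : F) *: pc x w M k)) -pc_eval.
Qed.

Lemma nseq_nn n (v : A) : (0 < n)%N -> nseq n v != [::].
Proof. by case: n. Qed.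
Lemma catnn (s t : seq A) : t != [::] -> s ++ t != [::].
Proof. by case: s. Qed.
Lemma rcons_nn (s : seq A) z : rcons s z != [::].
Proof. by case: s. Qed.

Lemma KL (I : A -> Prop) (HI : isIdeal I) M :
  (forall v, I (pr (nseq M.+1 v))) -> forall x y z, I (pr (nseq M x ++ z :: nseq M y)).
Proof.
move=> H x y z.
set T := pr (nseq M x ++ z :: nseq M y).
pose g i j := pr (nseq i x ++ z :: nseq j y ++ nseq (M - i) x ++ nseq (M - j) y).
pose S1 := \sum_(0 <= j < M.+1) pr ([::] ++ fl x (pr (z :: nseq j y)) M :: nseq (M - j) y).
pose S2 := \sum_(0 <= i < M) pr ((nseq i x ++ [:: z]) ++ fl y (pr (nseq (M - i) x)) M :: [::]).
have e1 : S1 = \sum_(0 <= j < M.+1) \sum_(0 <= i < M.+1) g i j.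
  apply: eq_big_nat => j hj; rewrite /fl pr_sum; apply: eq_big_nat => i hi.
  rewrite (pr_flat [::]); last by case: (nseq i x).
  rewrite cat0s -catA cat_cons (pr_flat (nseq i x)) //.
have e2 : S2 = \sum_(0 <= i < M) \sum_(0 <= j < M.+1) g i j.
  apply: eq_big_nat => i /andP [_ hi]; rewrite /fl pr_sum; apply: eq_big_nat => j hj.
  rewrite (pr_flat (nseq j y)); last by apply: nseq_nn; rewrite subn_gt0.
  rewrite (pr_flat (nseq i x ++ [:: z])); last by rewrite -size_eq0 !size_cat !size_nseq -lt0n !addn_gt0 subn_gt0 hi orbT.
  by rewrite cats0 -catA.
have e3 : S1 = T *+ M.+1 + S2.
  rewrite e1 e2 exchange_big /= big_nat_recr //= addrC; congr (_ + _).
  rewrite -(subn0 M.+1) -sumr_const_nat; apply: eq_big_nat => j /andP [_ hj].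
  by rewrite /g subnn cat0s -nseqD subnKC.
have hS1 : I S1.
  by apply: (@Isum _ HI) => j _; apply: (@Ipr _ HI); apply: lin_I.
have hS2 : I S2.
  by apply: (@Isum _ HI) => i _; apply: (@Ipr _ HI); apply: lin_I.
have hT : I (T *+ M.+1).
  have -> : T *+ M.+1 = S1 - S2 by rewrite e3 addrK.
  by apply: (@IB _ HI).
have hn : (M.+1%:R : F) != 0 by rewrite pnatr_eq0.
by rewrite -[T]scale1r -(mulVf hn) -scalerA scaler_nat; apply: (@IZ _ HI).
Qed.

Inductive Jc (I : A -> Prop) (m : nat) : A -> Prop :=
| Jc_I u : I u -> Jc I m u
| Jc_g v : Jc I m (pr (nseq m.+1 v))
| Jc_add u u' : Jc I m u -> Jc I m u' -> Jc I m (u + u')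
| Jc_scale c u : Jc I m u -> Jc I m (c *: u)
| Jc_l a u : Jc I m u -> Jc I m (a ** u)
| Jc_r a u : Jc I m u -> Jc I m (u ** a).

Lemma Jc_ideal I m : isIdeal I -> isIdeal (Jc I m).
Proof.
move=> HI; split; [by apply: Jc_I; apply: I0 | exact: Jc_add | exact: Jc_scale
  | exact: Jc_l | exact: Jc_r].
Qed.

Fixpoint NN m := if m is m'.+1 then (NN m').*2.+1 else 1%N.

Lemma NN_pos m : (0 < NN m)%N. Proof. by case: m. Qed.

Lemma NHI m : forall I, isIdeal I -> (forall v, I (pr (nseq m.+1 v))) ->
  forall s, size s = NN m -> I (pr s).
Proof.
elim: m => [|m IH] I HI H s hs.
  by case: s hs => [|a [|]] //= _; exact: (H a).
pose J := Jc I m.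
have HJ : isIdeal J by apply: Jc_ideal.
have IHJ := IH J HJ (@Jc_g I m).
have key : forall x y z, I (pr (nseq m.+1 x) ** z ** pr (nseq m.+1 y)).
  move=> x y z; have := @KL I HI _ H x y z.
  by rewrite -cat_rcons pr_cat ?rcons_nn // pr_rcons.
have gr : forall x v, J v -> forall z, I (pr (nseq m.+1 x) ** z ** v).
  move=> x v; elim => {v} [u hu|v|u u' _ IH1 _ IH2|c u _ IH1|a u _ IH1|a u _ IH1] z.
  - by apply: (@IL _ HI).
  - exact: key.
  - by rewrite mDr; apply: (@ID _ HI).
  - by rewrite mZr; apply: (@IZ _ HI).
  - by rewrite mA -(mA _ z a); apply: IH1.
  - by rewrite mA; apply: (@IR _ HI).
have JJ : forall u, J u -> forall v, J v -> forall z, I (u ** z ** v).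
  move=> u; elim => {u} [u hu|x|u u' _ IH1 _ IH2|c u _ IH1|a u _ IH1|a u _ IH1] v hv z.
  - by apply: (@IR _ HI); apply: (@IR _ HI).
  - exact: gr.
  - by rewrite !mDl; apply: (@ID _ HI); [apply: IH1|apply: IH2].
  - by rewrite !mZl; apply: (@IZ _ HI); apply: IH1.
  - by rewrite -!mA; apply: (@IL _ HI); rewrite !mA; apply: IH1.
  - by rewrite -(mA u a z); apply: IH1.
rewrite -(cat_take_drop (NN m) s).
have hd : size (drop (NN m) s) = (NN m).+1.
  by rewrite size_drop hs /= -addnn -addSn addnK.
have ht : size (take (NN m) s) = NN m.
  by rewrite size_takel // hs /= -addnn -addSn leq_addl.
case e: (drop (NN m) s) hd => [|z s2] //= [hs2].
have nt : take (NN m) s != [::] by rewrite -size_eq0 ht -lt0n NN_pos.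
have ns2 : s2 != [::] by rewrite -size_eq0 hs2 -lt0n NN_pos.
rewrite -cat_rcons pr_cat ?rcons_nn // pr_rcons //.
by apply: JJ; [apply: IHJ|apply: IHJ].
Qed.

Lemma NH n : (0 < n)%N -> (forall v, pr (nseq n v) = 0) -> nilpotent_algebra mulA.
Proof.
case: n => // m _ H.
have HI : isIdeal (fun y => y = 0).
  split => //; move=> *; subst; by rewrite ?addr0 ?scaler0 ?m0l ?m0r.
exists (NN m).-1 => x s hs.
have := @NHI m (fun y => y = 0) HI H (x :: s).
by apply; rewrite /= hs prednK // NN_pos.
Qed.

Definition W (k : nat) : word := FMonom (nseq k 0%N).

Lemma W_eq (w : word) k : (w == W k) = ((w : seq nat) == nseq k 0%N).
Proof. by rewrite fmP. Qed.

Lemma eval_word_pr a (w : seq nat) : eval_word mulA a w = pr (map a w).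
Proof.
case: w => [|i w] //=.
by elim: w (a i) => //= j w IH b; rewrite IH.
Qed.

Lemma pr_nseq_scale k t v : pr (nseq k (t *: v)) = t ^+ k *: pr (nseq k v).
Proof.
case: k => [|k]; first by rewrite /= scaler0.
elim: k => [|k IH]; first by rewrite /= expr1.
rewrite [nseq k.+2 _]nseqSr pr_rcons // IH mZl mZr scalerA -exprSr.
by rewrite -pr_rcons // -nseqSr.
Qed.

Definition at0 (t : F) (v : A) : nat -> A := fun i => if i == 0%N then t *: v else 0.

Lemma eval_at0 t v (w : seq nat) :
  eval_word mulA (at0 t v) w =
  if w == nseq (size w) 0%N then t ^+ size w *: pr (nseq (size w) v) else 0.
Proof.
rewrite eval_word_pr; case: eqP => [e|ne].
  by rewrite e map_nseq size_nseq /at0 eqxx pr_nseq_scale.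
have : ~~ all (pred1 0%N) w by apply/negP => /all_pred1P.
rewrite -has_predC => /hasP [i iw /= ni].
case/splitPr: iw ni => w1 w2 ni.
by rewrite map_cat /= /at0 (negbTE ni) pr_0.
Qed.


Lemma ideal0 : isIdeal (fun y : A => y = 0).
Proof. by split => //; move=> *; subst; rewrite ?addr0 ?scaler0 ?m0l ?m0r. Qed.

Lemma sum_if (S : seq word) (y : word) (x : A) : uniq S ->
  \sum_(w <- S) (if w == y then x else 0) = if y \in S then x else 0.
Proof.
move=> uS; case yS: (y \in S).
  rewrite (big_rem y) //= eqxx big_seq big1 ?addr0 // => w.
  by rewrite (mem_rem_uniq _ uS) => /andP [/negbTE -> _].
rewrite big_seq big1 // => w wS; case: eqP => // e.
by rewrite -e wS in yS.
Qed.

Lemma eval_sum (g : FXu F) t v K :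
  (forall w, w \in msupp g -> (size (w : seq nat) < K)%N) ->
  eval_poly mulA (at0 t v) g = \sum_(k < K) t ^+ k *: (g@_(W k) *: pr (nseq k v)).
Proof.
move=> hK; rewrite /eval_poly.
set S := finmap.enum_fset (msupp g).
pose h (w : word) := g@_w *: eval_word mulA (at0 t v) w.
transitivity (\sum_(w <- S) \sum_(k < K) (if w == W k then h (W k) else 0)).
  apply: eq_big_seq => w wS.
  have hw : (size (w : seq nat) < K)%N by apply: hK.
  rewrite eval_at0; case: eqP => e.
    rewrite (bigD1 (Ordinal hw)) //= big1 ?addr0.
      have -> : w == W (size (w : seq nat)) by rewrite W_eq; apply/eqP.
      have <- : w = W (size (w : seq nat)) by apply/eqP; rewrite W_eq; apply/eqP.
      by rewrite /h eval_at0; case: eqP.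
    move=> k hk; rewrite W_eq; case: eqP => // e2.
    have hs := f_equal size e2; rewrite size_nseq in hs.
    by move: hk; rewrite -val_eqE /= hs eqxx.
  rewrite scaler0 big1 // => k _; rewrite W_eq; case: eqP => // e2.
  exfalso; apply: e; have hs := f_equal size e2; rewrite size_nseq in hs; rewrite hs; exact: e2.
rewrite exchange_big /=; apply: eq_bigr => k _.
rewrite sum_if ?finmap.fset_uniq //.
case: ifP => [_|/negbT kS].
  by rewrite /h eval_at0 /= size_nseq eqxx scalerA mulrC -scalerA.
rewrite mcoeff_outdom ?scale0r ?scaler0 //.
Qed.

Lemma mhcomp_coef d (f : FXu F) w : (mhcomp d f)@_w = if has_multideg d w then f@_w else 0.
Proof.
rewrite /mhcomp mcoeffE; case: ifP => // /negbT wn.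
by case: ifP => // _; rewrite mcoeff_outdom.
Qed.

Lemma hmd_W m (w : word) : has_multideg [:: m] w = (w == W m).
Proof.
rewrite /has_multideg /= W_eq andbT.
apply/idP/eqP.
  case/andP => /allP h /eqP hc.
  have : all (pred1 0%N) w by apply/allP => x /h; rewrite ltnS leqn0.
  move/all_pred1P => e.
  have hs : size (w : seq nat) = m by rewrite -hc {2}e count_nseq /= mul1n.
  by rewrite e hs.
by move=> ->; rewrite all_nseq count_nseq /= mul1n eqxx orbT.
Qed.

Lemma W_neq1 k : (W k.+1 == @mone word) = false.
Proof. by rewrite fmP fm1. Qed.

Lemma nil_index (nrm : FXu F -> F) : MN_norm nrm -> completion_quot_nil mulA nrm ->
  exists n, (0 < n)%N /\ forall v, pr (nseq n v) = 0.
Proof.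
case=> [[Hpos Htri Hsc Hsub] Hmh] Hnil.
have in0 : in_FX (0 : FXu F) by rewrite /in_FX mcoeff0.
have n0 : nrm 0 = 0 by have := Hsc 0 0 in0; rewrite scale0r normr0 mul0r.
have id0 : is_identity mulA 0.
  by split => // a; rewrite /eval_poly msupp0 big_seq_fset0.
pose X : FXu F := << W 1 >>.
have inX : in_FX X by rewrite /in_FX mcoeffU1 W_neq1.
have hC : quot_cauchy mulA nrm (fun _ => X).
  split => // e e0; exists 0%N => k l _ _; exists 0; split => //.
  by rewrite subrr addr0 n0.
have XnE : forall m, X ^+ m.+1 = << W m.+1 >>.
  elim => [|m IH]; first by rewrite expr1.
  rewrite exprS IH malgM_def fgmulUU mulr1; congr mkmalgU.
  by apply/eqP; rewrite fmP fmM.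
case: (Hnil _ hC) => nn [hnn hN]; case: nn hnn hN => // n _ hN.
pose Xn : FXu F := << W n.+1 >>.
have inXn : in_FX Xn by rewrite /in_FX mcoeffU1 W_neq1.
have nXpos : 0 < nrm Xn.
  rewrite lt0r; case: (Hpos _ inXn) => -> h; rewrite andbT.
  apply/eqP => /h /eqP; rewrite -msupp_eq0 /Xn msuppU1.
  by apply/negP; apply/fset0Pn; exists (W n.+1); rewrite inE.
case: (hN _ nXpos) => N hN'.
case: (hN' N (leqnn N)); rewrite XnE => g [[ing idg] hg].
set c := g@_(W n.+1).
have inXg : in_FX (Xn + g) by rewrite /in_FX mcoeffD inXn ing addr0.
have hm : mhcomp [:: n.+1] (Xn + g) = (1 + c) *: Xn.
  apply/malgP => w; rewrite mhcomp_coef hmd_W mcoeffZ mcoeffU1.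
  case: eqP => [->|ne]; first by rewrite mcoeffD mcoeffU1 eqxx mulr1.
  have /negbTE -> : W n.+1 != w by apply/eqP => e; apply: ne.
  by rewrite mulr0.
have := Hmh _ [:: n.+1] inXg; rewrite hm Hsc // => hle.
have c0 : c != 0.
  apply/eqP => c0; move: hle; rewrite c0 addr0 normr1 mul1r => hle.
  by have := order.Order.POrderTheory.le_lt_trans hle hg; rewrite order.Order.POrderTheory.ltxx.
exists n.+1; split => // v.
pose K := ((\max_(w <- finmap.enum_fset (msupp g)) size (w : seq nat)) + n.+2)%N.
have hK : forall w, w \in msupp g -> (size (w : seq nat) < K)%N.
  move=> w wS; rewrite /K addnS ltnS; apply: leq_trans (leq_addr _ _).
  by apply: leq_bigmax_seq.
have hnK : (n.+1 < K)%N by rewrite /K addnS ltnS addnS ltnS leq_addl.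
have hv : g@_(W n.+1) *: pr (nseq n.+1 v) = 0.
  apply: (@vdm (fun y => y = 0) ideal0 K (fun k => g@_(W k) *: pr (nseq k v)) _ (Ordinal hnK)).
  move=> t; rewrite -eval_sum //; exact: idg.
by move/eqP: hv; rewrite scaler_eq0 (negbTE c0) /= => /eqP.
Qed.

Lemma main_thm (nrm : FXu F -> F) : MN_norm nrm -> completion_quot_nil mulA nrm ->
  nilpotent_algebra mulA.
Proof.
move=> Hn Hc; case: (@nil_index nrm Hn Hc) => n [n0 H].
exact: NH n0 H.
Qed.

End NH.

Theorem corollary1p6 (R : realType) :
  (* F = R *)
  (forall (nrm : FXu R -> R), MN_norm nrm ->
   forall (A : lmodType R) (mulA : A -> A -> A),
     nonunital_algebra mulA -> PI_algebra mulA ->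
     completion_quot_nil mulA nrm -> nilpotent_algebra mulA) /\
  (* F = C = R[i] *)
  (forall (nrm : FXu R[i] -> R[i]), MN_norm nrm ->
   forall (A : lmodType R[i]) (mulA : A -> A -> A),
     nonunital_algebra mulA -> PI_algebra mulA ->
     completion_quot_nil mulA nrm -> nilpotent_algebra mulA).
Proof.
split => nrm Hn A mulA HA _ Hc.
  exact: (@main_thm _ A mulA HA nrm Hn Hc).
exact: (@main_thm _ A mulA HA nrm Hn Hc).
Qed.
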